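(* Let $\mathbb{K}$ be a field, $X$ a set and $\alpha=(\{D_t\}_{t\in G},\{\alpha_t\}_{t\in G})$ a partial action of a group $G$ on the algebra $\mathcal{F}_0(X)$. Then there exists a partial action $\theta=(\{X_t\}_{t\in G},\{h_t\}_{t\in G})$ of $G$ on $X$ such that $D_t=\mathcal{F}_0(X_t)$ and $\alpha_t(f)=f\circ h_{t^{-1}}$ for all $t\in G$ and $f\in D_{t^{-1}}$ (i.e. $\alpha$ arises from $\theta$).
   Context: $\mathcal{F}_0(X)$ is the $\mathbb{K}$-algebra of finitely supported functions $X\to\mathbb{K}$ with pointwise operations, and for $A\subseteq X$, $\mathcal{F}_0(A)=\{f\in\mathcal{F}_0(X):f(x)=0\ \forall x\notin A\}$. A partial action of $G$ on a set $X$ is a pair $(\{X_t\},\{h_t\})$ with $X_t\subseteq X$, bijections $h_t:X_{t^{-1}}\to X_t$, $X_e=X$, $h_e=\mathrm{id}$, $h_t(X_{t^{-1}}\cap X_s)=X_t\cap X_{ts}$, $h_t(h_s(x))=h_{ts}(x)$ for $x\in X_{s^{-1}}\cap X_{s^{-1}t^{-1}}$. A partial action of $G$ on an algebra $A$ is a pair $(\{D_t\},\{\alpha_t\})$ with $D_t$ two-sided ideals, $\alpha_t:D_{t^{-1}}\to D_t$ algebra isomorphisms, $D_e=A$, $\alpha_e=\mathrm{id}$, $\alpha_t(D_{t^{-1}}\cap D_s)=D_t\cap D_{ts}$, $\alpha_t\alpha_s=\alpha_{ts}$ on $D_{s^{-1}}\cap D_{s^{-1}t^{-1}}$. *)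

(* Defs.v *)
From mathcomp Require Import all_boot all_algebra.
From Stdlib Require Import List.
Set Implicit Arguments. Unset Strict Implicit. Unset Printing Implicit Defensive.
Import GRing.Theory.
Local Open Scope ring_scope.

Definition is_group (G : Type) (mul : G -> G -> G) (inv : G -> G) (e : G) : Prop :=
  (forall a b c, mul a (mul b c) = mul (mul a b) c) /\
  (forall a, mul e a = a) /\ (forall a, mul a e = a) /\
  (forall a, mul (inv a) a = e) /\ (forall a, mul a (inv a) = e).

(* F_0(A) for A ⊆ X: finitely supported functions X -> K vanishing outside A.
   F_0(X) is F0on (fun _ => True). *)
Definition fin_supp (K : fieldType) (X : Type) (f : X -> K) : Prop :=
  exists s : list X, forall x, f x <> 0 -> List.In x s.

Definition F0on (K : fieldType) (X : Type) (A : X -> Prop) (f : X -> K) : Prop :=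
  fin_supp f /\ forall x, ~ A x -> f x = 0.

Definition F0 (K : fieldType) (X : Type) (f : X -> K) : Prop :=
  F0on (fun _ : X => True) f.

Definition fadd (K : fieldType) (X : Type) (f g : X -> K) : X -> K := fun x => f x + g x.
Definition fmul (K : fieldType) (X : Type) (f g : X -> K) : X -> K := fun x => f x * g x.
Definition fscale (K : fieldType) (X : Type) (c : K) (f : X -> K) : X -> K := fun x => c * f x.
Definition fzero (K : fieldType) (X : Type) : X -> K := fun _ => 0.

Definition is_ideal (K : fieldType) (X : Type) (D : (X -> K) -> Prop) : Prop :=
  (forall f, D f -> F0 f) /\
  D (@fzero K X) /\
  (forall f g, D f -> D g -> D (fadd f g)) /\
  (forall c f, D f -> D (fscale c f)) /\
  (forall f g, D f -> F0 g -> D (fmul g f) /\ D (fmul f g)).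

Definition alg_iso (K : fieldType) (X : Type) (D1 D2 : (X -> K) -> Prop)
    (a : (X -> K) -> (X -> K)) : Prop :=
  (forall f, D1 f -> D2 (a f)) /\
  (forall f g, D1 f -> D1 g -> a f = a g -> f = g) /\
  (forall g, D2 g -> exists f, D1 f /\ a f = g) /\
  (forall f g, D1 f -> D1 g -> a (fadd f g) = fadd (a f) (a g)) /\
  (forall f g, D1 f -> D1 g -> a (fmul f g) = fmul (a f) (a g)) /\
  (forall c f, D1 f -> a (fscale c f) = fscale c (a f)).

Definition partial_action_alg (G : Type) (mul : G -> G -> G) (inv : G -> G) (e : G)
    (K : fieldType) (X : Type)
    (D : G -> (X -> K) -> Prop) (alpha : G -> (X -> K) -> (X -> K)) : Prop :=
  (forall t, is_ideal (D t)) /\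
  (forall t, alg_iso (D (inv t)) (D t) (alpha t)) /\
  (forall f, D e f <-> F0 f) /\
  (forall f, F0 f -> alpha e f = f) /\
  (forall t s g, (D t g /\ D (mul t s) g) <->
                 (exists f, (D (inv t) f /\ D s f) /\ alpha t f = g)) /\
  (forall t s f, D (inv s) f -> D (mul (inv s) (inv t)) f ->
                 alpha t (alpha s f) = alpha (mul t s) f).

Definition partial_action_set (G : Type) (mul : G -> G -> G) (inv : G -> G) (e : G)
    (X : Type) (Xt : G -> X -> Prop) (h : G -> X -> X) : Prop :=
  (forall t x, Xt (inv t) x -> Xt t (h t x)) /\
  (forall t x y, Xt (inv t) x -> Xt (inv t) y -> h t x = h t y -> x = y) /\
  (forall t y, Xt t y -> exists x, Xt (inv t) x /\ h t x = y) /\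
  (forall x, Xt e x) /\
  (forall x, h e x = x) /\
  (forall t s y, (Xt t y /\ Xt (mul t s) y) <->
                 (exists x, (Xt (inv t) x /\ Xt s x) /\ h t x = y)) /\
  (forall t s x, Xt (inv s) x -> Xt (mul (inv s) (inv t)) x ->
                 h t (h s x) = h (mul t s) x).

(* Main.v *)
Require Import Defs.
From mathcomp Require Import all_boot all_algebra.
From Stdlib Require Import List Classical ClassicalEpsilon FunctionalExtensionality.
Import GRing.Theory.
Local Open Scope ring_scope.

Definition delta (K : fieldType) {X : Type} (x : X) : X -> K :=
  fun z => if excluded_middle_informative (z = x) then 1 else 0.

Lemma delta_x (K : fieldType) {X : Type} (x : X) : delta K x x = 1.
Proof. rewrite /delta; by case: excluded_middle_informative. Qed.

Lemma delta_n (K : fieldType) {X : Type} {x z : X} : z <> x -> delta K x z = 0.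
Proof. rewrite /delta; by case: excluded_middle_informative. Qed.

Lemma delta_inj (K : fieldType) {X : Type} (x y : X) : delta K x = delta K y -> x = y.
Proof.
move=> E; have := f_equal (fun f => f x) E; rewrite /= delta_x.
case: (classic (x = y)) => // nxy; rewrite (delta_n K nxy); move/eqP; by rewrite oner_eq0.
Qed.

Lemma F0_delta (K : fieldType) {X : Type} (x : X) : F0 (delta K x).
Proof.
split => //; exists (cons x nil) => z /= Hz; left.
case: (classic (z = x)) => [->//|nzx]; by rewrite (delta_n K nzx) in Hz.
Qed.

Theorem mainTheorem9 (K : fieldType) (X : Type)
    (G : Type) (mul : G -> G -> G) (inv : G -> G) (e : G)
    (HG : is_group mul inv e)
    (D : G -> (X -> K) -> Prop) (alpha : G -> (X -> K) -> (X -> K))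
    (Halpha : partial_action_alg mul inv e D alpha) :
  exists (Xt : G -> X -> Prop) (h : G -> X -> X),
    partial_action_set mul inv e Xt h /\
    (forall t f, D t f <-> F0on (Xt t) f) /\
    (forall t f, D (inv t) f ->
       forall x, (Xt t x -> alpha t f x = f (h (inv t) x)) /\
                 (~ Xt t x -> alpha t f x = 0)).
Proof.
case: HG => Hass [Hel [Her [Hil Hir]]].
case: Halpha => Hid [Hiso [He [Hae [H5 H6]]]].
have invinv : forall t, inv (inv t) = t.
  move=> t; by rewrite -{1}(Her (inv (inv t))) -(Hil t) Hass Hil Hel.
have inv_e : inv e = e by rewrite -[RHS](Hil e) Her.
have inv_mul : forall t s, inv (mul t s) = mul (inv s) (inv t).
  move=> t s.
  have E : mul (mul t s) (mul (inv s) (inv t)) = e.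
    by rewrite -Hass (Hass s) Hir Hel Hir.
  by rewrite -{1}(Her (inv (mul t s))) -E Hass Hil Hel.
pose Xt := fun t x => exists f, D t f /\ f x <> 0.
have XtD : forall t y, Xt t y <-> D t (delta K y).
  move=> t y; split.
    case=> f [Df fy]; have [_ [_ [_ [Hsc Hmul]]]] := Hid t.
    have -> : delta K y = fscale (f y)^-1 (fmul (delta K y) f).
      apply: functional_extensionality => z; rewrite /fscale /fmul.
      case: (classic (z = y)) => [->|nz].
        by rewrite delta_x mul1r mulVf //; apply/eqP.
      by rewrite delta_n // mul0r mulr0.
    apply: Hsc; exact: (proj1 (Hmul _ _ Df (F0_delta K y))).
  move=> Dd; exists (delta K y); split => //; rewrite delta_x; apply/eqP; exact: oner_neq0.
have DF0on : forall t f, D t f <-> F0on (Xt t) f.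
  move=> t f; have [HF [Hz [Hadd [Hsc Hmul]]]] := Hid t; split.
    move=> Df; split; first exact: (proj1 (HF _ Df)).
    move=> x nx; apply: NNPP => fx; apply: nx; by exists f.
  case=> [[s Hs] Hout]; elim: s f Hs Hout => [|a s IH] f Hs Hout.
    have -> : f = @fzero K X; last exact: Hz.
    apply: functional_extensionality => z; apply: NNPP => fz; exact: (Hs z fz).
  pose f' := fun z => f z * (1 - delta K a z).
  have -> : f = fadd (fscale (f a) (delta K a)) f'.
    apply: functional_extensionality => z; rewrite /fadd /fscale /f'.
    case: (classic (z = a)) => [->|nz].
      by rewrite delta_x subrr !mulr1 mulr0 addr0.
    by rewrite (delta_n K nz) subr0 mulr0 mulr1 add0r.
  apply: Hadd.
    case: (classic (Xt t a)) => [/XtD Da|na]; first exact: Hsc.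
    rewrite (Hout a na).
    have -> : fscale 0 (delta K a) = @fzero K X.
      by apply: functional_extensionality => z; rewrite /fscale mul0r.
    exact: Hz.
  apply: IH.
    move=> z; rewrite /f'; case: (classic (z = a)) => [->|nz].
      by rewrite delta_x subrr mulr0.
    rewrite (delta_n K nz) subr0 mulr1 => fz.
    case: (Hs z fz) => // E; exfalso; exact: nz (esym E).
  move=> z nz; rewrite /f' (Hout z nz); exact: mul0r.
have alpha0 : forall t, alpha t (@fzero K X) = @fzero K X.
  move=> t; have [Amap [Ainj [Asurj [Aadd [Amul Asc]]]]] := Hiso t.
  have [_ [Hz _]] := Hid (inv t).
  have E : fscale 0 (@fzero K X) = @fzero K X.
    by apply: functional_extensionality => z; rewrite /fscale mul0r.
  rewrite -{1}E Asc //; apply: functional_extensionality => z; by rewrite /fscale mul0r.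
have key : forall t x, Xt (inv t) x ->
    exists y, Xt t y /\ alpha t (delta K x) = delta K y.
  move=> t x /XtD Dx.
  have [Amap [Ainj [Asurj [Aadd [Amul Asc]]]]] := Hiso t.
  have [_ [Hz [_ [_ Hmul]]]] := Hid (inv t).
  set g := alpha t (delta K x).
  have Dg : D t g := Amap _ Dx.
  have [y gy] : exists y, g y <> 0.
    apply: NNPP => H.
    have gz : g = @fzero K X.
      apply: functional_extensionality => z; apply: NNPP => gz; apply: H; by exists z.
    have : delta K x = @fzero K X.
      apply: Ainj => //; by rewrite -/g gz alpha0.
    move/(f_equal (fun f => f x)); rewrite delta_x /fzero; move/eqP; by rewrite oner_eq0.
  have dd : fmul (delta K x) (delta K x) = delta K x.
    apply: functional_extensionality => z; rewrite /fmul.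
    case: (classic (z = x)) => [->|nz]; by rewrite ?delta_x ?delta_n // ?mulr1 ?mulr0.
  have gg : fmul g g = g by rewrite /g -Amul // dd.
  have gy1 : g y = 1.
    have := f_equal (fun f => f y) gg; rewrite /fmul => E.
    apply: (mulfI (x := g y)); first by apply/eqP.
    by rewrite mulr1 E.
  have Dy : D t (delta K y) by apply/XtD; exists g.
  have [f [Df af]] := Asurj _ Dy.
  have Dfx : D (inv t) (fmul f (delta K x)) := (proj2 (Hmul _ _ Df (F0_delta K x))).
  have ffx : fmul f (delta K x) = f.
    apply: Ainj => //; rewrite Amul // af -/g.
    apply: functional_extensionality => z; rewrite /fmul.
    case: (classic (z = y)) => [->|nz]; by rewrite ?delta_x ?delta_n // ?gy1 ?mul1r ?mul0r.
  have fsc : f = fscale (f x) (delta K x).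
    apply: functional_extensionality => z.
    have := f_equal (fun h => h z) ffx; rewrite /fmul /fscale.
    case: (classic (z = x)) => [->|nz]; first by rewrite delta_x mulr1.
    rewrite delta_n // => <-; by rewrite !mulr0.
  rewrite fsc Asc // -/g in af.
  exists y; split; first by apply/XtD.
  have := f_equal (fun h => h y) af; rewrite /fscale gy1 delta_x mulr1 => fx1.
  apply: functional_extensionality => z.
  have := f_equal (fun h => h z) af; by rewrite /fscale fx1 mul1r.
pose h := fun t x => epsilon (inhabits x)
   (fun y => Xt (inv t) x -> Xt t y /\ alpha t (delta K x) = delta K y).
have Hh : forall t x, Xt (inv t) x ->
    Xt t (h t x) /\ alpha t (delta K x) = delta K (h t x).
  move=> t x Hx; rewrite /h.
  apply: (epsilon_spec (inhabits x)
     (fun y => Xt (inv t) x -> Xt t y /\ alpha t (delta K x) = delta K y)) => //.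
  have [y [Hy E]] := key t x Hx; by exists y.
have hunique : forall t x y, Xt (inv t) x -> alpha t (delta K x) = delta K y -> h t x = y.
  move=> t x y Hx E; have [_ E'] := Hh t x Hx; apply: (delta_inj K); by rewrite -E' E.
have hinv : forall t y, Xt t y ->
    Xt (inv t) (h (inv t) y) /\ alpha t (delta K (h (inv t) y)) = delta K y.
  move=> t y Hy.
  have Hy' : Xt (inv (inv t)) y by rewrite invinv.
  have [Hx E] := Hh _ _ Hy'; split => //.
  have D1 : D (inv (inv t)) (delta K y) by apply/XtD.
  have D2 : D (mul (inv (inv t)) (inv t)) (delta K y).
    by rewrite invinv Hir; apply/He; exact: F0_delta.
  rewrite -E (H6 t (inv t) _ D1 D2) Hir; apply: Hae; exact: F0_delta.
exists Xt, h; split; last split.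
- split; [|split; [|split; [|split; [|split; [|split]]]]].
  + move=> t x Hx; exact: (proj1 (Hh t x Hx)).
  + move=> t x y Hx Hy E.
    have [Amap [Ainj _]] := Hiso t.
    have [_ Ex] := Hh _ _ Hx; have [_ Ey] := Hh _ _ Hy.
    apply: (delta_inj K); apply: Ainj; try exact: (proj1 (XtD _ _)).
    by rewrite Ex Ey E.
  + move=> t y Hy; exists (h (inv t) y); have [Hx E] := hinv t y Hy; split => //.
    exact: hunique.
  + move=> x; apply/XtD/He; exact: F0_delta.
  + move=> x; apply: hunique; last (apply: Hae; exact: F0_delta).
    rewrite inv_e; apply/XtD/He; exact: F0_delta.
  + move=> t s y; split.
    * case=> Hyt /XtD Dts.
      have Dt := (proj1 (XtD _ _)) Hyt.
      have [Hx E] := hinv t y Hyt.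
      have [f [[Df1 Df2] Ef]] := (proj1 (H5 t s (delta K y))) (conj Dt Dts).
      have [_ [Ainj _]] := Hiso t.
      have fx : f = delta K (h (inv t) y).
        apply: Ainj => //; [exact: (proj1 (XtD _ _)) | by rewrite Ef E].
      exists (h (inv t) y); split; last exact: hunique.
      split => //; apply/XtD; by rewrite -fx.
    * case=> x [[Hx1 Hx2] <-].
      have [_ E] := Hh t x Hx1.
      have [D1 D2] := (proj2 (H5 t s (delta K (h t x))))
        (ex_intro _ (delta K x) (conj (conj ((proj1 (XtD _ _)) Hx1) ((proj1 (XtD _ _)) Hx2)) E)).
      by split; apply/XtD.
  + move=> t s x Hx1 Hx2.
    have [Hy Ey] := Hh s x Hx1.
    have Hz : Xt (inv t) (h s x).
      have [_ D2] := (proj2 (H5 s (mul (inv s) (inv t)) (delta K (h s x))))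
        (ex_intro _ (delta K x) (conj (conj ((proj1 (XtD _ _)) Hx1) ((proj1 (XtD _ _)) Hx2)) Ey)).
      apply/XtD; by rewrite Hass Hir Hel in D2.
    have [_ Ez] := Hh t _ Hz.
    symmetry; apply: hunique; first by rewrite inv_mul.
    rewrite -(H6 t s) ?Ey ?Ez //; exact: (proj1 (XtD _ _)).
- exact: DF0on.
- move=> t f Df x.
  have [Amap [Ainj [Asurj [Aadd [Amul Asc]]]]] := Hiso t.
  have Daf : D t (alpha t f) := Amap _ Df.
  split; last first.
    move=> nx; exact: (proj2 (proj1 (DF0on t _) Daf)) x nx.
  move=> Hx.
  have [Hy E] := hinv t x Hx.
  have Dy := (proj1 (XtD _ _)) Hy.
  have : alpha t (fmul f (delta K (h (inv t) x))) = fmul (alpha t f) (delta K x).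
    by rewrite Amul // E.
  have -> : fmul f (delta K (h (inv t) x)) =
            fscale (f (h (inv t) x)) (delta K (h (inv t) x)).
    apply: functional_extensionality => z; rewrite /fmul /fscale.
    case: (classic (z = h (inv t) x)) => [->|nz]; first by rewrite delta_x mulr1.
    by rewrite delta_n // !mulr0.
  rewrite Asc // E => /(f_equal (fun g => g x)).
  by rewrite /fscale /fmul delta_x !mulr1 => ->.
Qed.
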